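(* Let $\boldsymbol{\omega}\in\mathbb{R}^d$, $\tau>d-1$, and let $\gamma>0$ be a constant such that (a) $\delta_j(\boldsymbol{\omega}\cdot\boldsymbol{\nu})\ge\gamma|\boldsymbol{\nu}|^{-\tau}$ for all $j$ and all $\boldsymbol{\nu}\ne\boldsymbol{0},\sigma(\boldsymbol{\nu},j)\boldsymbol{e}_j$, and (b) $\delta_j(\boldsymbol{\omega}\cdot\boldsymbol{\nu})+\delta_{j'}(\boldsymbol{\omega}\cdot\boldsymbol{\nu}')\ge\gamma|\boldsymbol{\nu}-\boldsymbol{\nu}'|^{-\tau}$ for all $j,j'\in\{1,\ldots,d\}$ and all $\boldsymbol{\nu}\ne\boldsymbol{\nu}'$ with $\boldsymbol{\nu}-\boldsymbol{\nu}'\ne\sigma(\boldsymbol{\nu},j)\boldsymbol{e}_j-\sigma(\boldsymbol{\nu}',j')\boldsymbol{e}_{j'}$. Let $\boldsymbol{\nu},\boldsymbol{\nu}'\in\mathbb{Z}^d$ with $\boldsymbol{\nu}\ne\boldsymbol{\nu}'$ and suppose that for some $n\in\{0,1,2,\ldots\}$ and $j,j'\in\{1,\ldots,d\}$ one has $\delta_j(\boldsymbol{\omega}\cdot\boldsymbol{\nu})\le2^{-n}\gamma$ and $\delta_{j'}(\boldsymbol{\omega}\cdot\boldsymbol{\nu}')\le2^{-n}\gamma$. Then either $|\boldsymbol{\nu}-\boldsymbol{\nu}'|>2^{(n-2)/\tau}$, or $|\boldsymbol{\nu}-\boldsymbol{\nu}'|=2$ and $\delta_j(\boldsymbol{\o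mega}\cdot\boldsymbol{\nu})=\delta_{j'}(\boldsymbol{\omega}\cdot\boldsymbol{\nu}')$.
   Context: $|\boldsymbol{\nu}|=|\nu_1|+\cdots+|\nu_d|$; $\boldsymbol{e}_j$ is the $j$-th standard basis vector. For $j\in\{1,\ldots,d\}$ and $\boldsymbol{\nu}\in\mathbb{Z}^d$, $\delta_j(\boldsymbol{\omega}\cdot\boldsymbol{\nu}):=\min\{|\boldsymbol{\omega}\cdot\boldsymbol{\nu}-\omega_j|,|\boldsymbol{\omega}\cdot\boldsymbol{\nu}+\omega_j|\}=|\boldsymbol{\omega}\cdot(\boldsymbol{\nu}-\sigma(\boldsymbol{\nu},j)\boldsymbol{e}_j)|$, where $\sigma(\boldsymbol{\nu},j)\in\{\pm1\}$ is a minimizer. (Such a $\gamma$ exists when $\boldsymbol{\omega}$ satisfies $|\boldsymbol{\omega}\cdot\boldsymbol{\nu}|>\gamma_0|\boldsymbol{\nu}|^{-\tau}$ for all nonzero $\boldsymbol{\nu}\in\mathbb{Z}^d$.) *)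

(* Defs.v *)
From HB Require Import structures.
From mathcomp Require Import all_boot all_order all_algebra.
From mathcomp Require Import reals exp.
Set Implicit Arguments. Unset Strict Implicit. Unset Printing Implicit Defensive.
Import Order.TTheory GRing.Theory Num.Theory.
Local Open Scope ring_scope.

(* omega . nu, for omega in R^d and nu in Z^d (row vectors, indices 'I_d = {1..d} shifted) *)
Definition dotp {R : realType} {d : nat} (w : 'rV[R]_d) (nu : 'rV[int]_d) : R :=
  \sum_(i < d) w 0 i * (nu 0 i)%:~R.

Definition norm1 {d : nat} (nu : 'rV[int]_d) : nat :=
  \sum_(i < d) `|nu ord0 i|%N.

Definition evec {d : nat} (j : 'I_d) : 'rV[int]_d := delta_mx 0 j.

Definition deltaj {R : realType} {d : nat} (w : 'rV[R]_d) (j : 'I_d)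
  (nu : 'rV[int]_d) : R :=
  Num.min `|dotp w nu - w 0 j| `|dotp w nu + w 0 j|.

(* sigma(nu, j) in {+1,-1}: a minimizer; ties broken in favour of +1 *)
Definition sigma {R : realType} {d : nat} (w : 'rV[R]_d) (nu : 'rV[int]_d)
  (j : 'I_d) : int :=
  if `|dotp w nu - w 0 j| <= `|dotp w nu + w 0 j| then 1 else -1.

(* Main.v *)
Require Import Defs.
From HB Require Import structures.
From mathcomp Require Import all_boot all_order all_algebra.
From mathcomp Require Import reals exp.
Import Order.TTheory GRing.Theory Num.Theory.
Local Open Scope ring_scope.

Lemma dotp_sub (R : realType) d (w : 'rV[R]_d) (nu : 'rV[int]_d) (s : int) (j : 'I_d) :
  dotp w (nu - s *: evec j) = dotp w nu - s%:~R * w 0 j.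
Proof.
rewrite /dotp.
under eq_bigr => i _ do rewrite !mxE intrD intrN mulrDr mulrN.
rewrite big_split /= sumrN; congr (_ - _).
rewrite (bigD1 j) //= big1 ?addr0.
  by rewrite eqxx /= mulr1 mulrC.
by move=> i /negbTE hi; rewrite hi mulr0 mulr0.
Qed.

Lemma deltajE (R : realType) d (w : 'rV[R]_d) (nu : 'rV[int]_d) (j : 'I_d) :
  deltaj w j nu = `|dotp w (nu - sigma w nu j *: evec j)|.
Proof.
rewrite dotp_sub /deltaj /sigma.
case: ifP => h.
  by rewrite mul1r; apply/min_idPl.
rewrite mulN1r opprK; apply/min_idPr; by apply: ltW; rewrite ltNge h.
Qed.

Lemma sigma_pm (R : realType) d (w : 'rV[R]_d) nu j : (sigma w nu j == 1) || (sigma w nu j == -1).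
Proof. by rewrite /sigma; case: ifP. Qed.

Lemma norm1_two d (j j' : 'I_d) (s s' : int) :
  (s == 1) || (s == -1) -> (s' == 1) || (s' == -1) ->
  s *: evec j - s' *: evec j' != 0 -> norm1 (s *: evec j - s' *: evec j') = 2%N.
Proof.
move=> hs hs' hnz; rewrite /norm1.
have E : forall i, (s *: evec j - s' *: evec j') ord0 i = s * (i == j)%:R - s' * (i == j')%:R.
  by move=> i; rewrite !mxE.
have [ejj|njj] := eqVneq j j'.
  subst j'.
  have hss : s != s'.
    by apply: contraNneq hnz => ->; rewrite subrr.
  rewrite (bigD1 j) //= big1 ?addn0; last first.
    by move=> i /negbTE hi; rewrite E hi !mulr0 subrr.
  rewrite E eqxx !mulr1.
  by move: hs hs' hss; do 2 case/orP => /eqP ->.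
rewrite (bigD1 j) //= (bigD1 j') /=; last by rewrite eq_sym njj.
rewrite big1 ?addn0; last first.
  by move=> i /andP [/negbTE h1 /negbTE h2]; rewrite E h1 h2 !mulr0 subrr.
rewrite !E eqxx (negbTE njj) eq_sym (negbTE njj) !mulr0 !mulr1 subr0 sub0r.
rewrite eqxx mulr1.
by move: hs hs'; do 2 case/orP => /eqP ->.
Qed.
From mathcomp Require Import lra.

Theorem lemma3p2 (R : realType) (d : nat) (w : 'rV[R]_d) (tau gamma : R)
  (htau : (d%:R - 1 < tau)) (hgamma : 0 < gamma)
  (ha : forall (j : 'I_d) (nu : 'rV[int]_d),
      nu != 0 -> nu != (sigma w nu j) *: evec j ->
      gamma * powR (norm1 nu)%:R (- tau) <= deltaj w j nu)
  (hb : forall (j j' : 'I_d) (nu nu' : 'rV[int]_d),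
      nu != nu' ->
      nu - nu' != (sigma w nu j) *: evec j - (sigma w nu' j') *: evec j' ->
      gamma * powR (norm1 (nu - nu'))%:R (- tau) <= deltaj w j nu + deltaj w j' nu')
  (nu nu' : 'rV[int]_d) (hne : nu != nu') (n : nat) (j j' : 'I_d)
  (h1 : deltaj w j nu <= (2 ^- n) * gamma)
  (h2 : deltaj w j' nu' <= (2 ^- n) * gamma) :
  powR 2 ((n%:R - 2) / tau) < (norm1 (nu - nu'))%:R
  \/ (norm1 (nu - nu') = 2%N /\ deltaj w j nu = deltaj w j' nu').
Proof.
have hd : (0 < d)%N.
  case: d {w htau ha hb} nu nu' hne j j' {h1 h2} => [|d'] // nu nu' hne [] //.
have htau0 : 0 < tau.
  apply: le_lt_trans htau; rewrite subr_ge0 ler1n; exact: hd.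
set a := sigma w nu j *: evec j; set b := sigma w nu' j' *: evec j'.
have [hB|hA] := eqVneq (nu - nu') (a - b).
  right; split.
    rewrite hB; apply: norm1_two; try exact: sigma_pm.
    by rewrite -hB subr_eq0.
  rewrite !deltajE -/a -/b; congr (`|dotp w _|).
  rewrite -[nu](subrK nu') hB.
  by rewrite addrAC (addrAC a) subrr add0r addrC.
left.
have key := hb j j' nu nu' hne hA.
set N := norm1 (nu - nu') in key *.
have hN : (0 < N)%N.
  rewrite lt0n; apply: contra hne => /eqP H0.
  rewrite -subr_eq0; apply/eqP/matrixP => i k.
  rewrite ord1 [RHS]mxE; apply/eqP; rewrite -absz_eq0.
  move/eqP: H0; rewrite /N /norm1 sum_nat_eq0 => /forallP /(_ k) /=.
  by [].
have hNR : (0 : R) < N%:R by rewrite ltr0n.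
have hp : powR N%:R (- tau) <= 2 * 2 ^- n.
  have : gamma * powR N%:R (- tau) <= gamma * (2 * 2 ^- n) by lra.
  by rewrite ler_pM2l.
have h2p : (0 : R) < 2 ^- n by rewrite invr_gt0 exprn_gt0.
have := hp; rewrite -ler_ln ?posrE ?powR_gt0 ?mulr_gt0 // ln_powR lnM ?posrE //.
rewrite lnV ?posrE ?exprn_gt0 // lnXn // => hl.
rewrite -ltr_ln ?posrE ?powR_gt0 // ln_powR mulrAC ltr_pdivrMr //.
have hl2 : 0 < ln (2 : R) by apply: ln_gt0; lra.
rewrite mulrBl -mulr_natl.
have : (n%:R - 1) * ln (2:R) <= tau * ln N%:R.
  move: hl; rewrite -mulr_natr. nra.
nra.
Qed.
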